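(* Let $P$, $\mathcal{R}$ and the algorithm be as below, with output graph $G$. Let $q,q'\in P$ with $x(q)<x(q')$ such that the edge $qq'$ is Delaunay. If $qq'\notin E(G)$, then either (i) $h(qq')$ discretely pierces a rectangle of $\mathcal{R}$ or crosses an edge existing when $q'$ is processed, or (ii) $v(qq')$ discretely pierces a rectangle of $\mathcal{R}$. In particular, $v(qq')$ does not cross an existing edge.
   Context: $P$ is a finite point set and $\mathcal{R}$ a finite family of non-piercing axis-parallel rectangles (for any $R_1,R_2$, $R_1\setminus R_2$ connected), in general position. For $x(q)<x(q')$ the edge $qq'$ is the L-shaped curve consisting of the vertical segment $v(qq')$ from $q'$ to $(x(q'),y(q))$ and the horizontal segment $h(qq')$ from $(x(q'),y(q))$ to $q$. It is Delaunay if the interior of the rectangle with diagonal corners $q,q'$ contains no point of $P$. A set $S$ discretely pierces a rectangle $R$ if $R\setminus S$ has two components, each containing a point of $P$. An edge is valid if it discretely pierces no rectangle of $\mathcal{R}$ and crosses no edge already present. The algorithm sorts $P$ by $x$-coordinate as $p_1,\dots,p_n$ and for $i=2,\dots,n$ (processing $p_i$) adds all valid Delaunay edges $p_ip_j$ with $j<i$. *)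

(* Defs.v *)
From HB Require Import structures.
From mathcomp Require Import all_boot all_order all_algebra.
From mathcomp Require Import all_classical all_reals all_analysis.
Set Implicit Arguments. Unset Strict Implicit. Unset Printing Implicit Defensive.
Import Order.TTheory GRing.Theory Num.Theory numFieldNormedType.Exports.
Local Open Scope classical_set_scope.
Local Open Scope ring_scope.

Section Defs.
Variable R : realType.

Local Notation pt := (R * R)%type.

(* closed axis-parallel rectangle [rxl, rxr] x [ryb, ryt] *)
Definition rect := ((R * R) * (R * R))%type.
Definition rxl (r : rect) : R := r.1.1.
Definition rxr (r : rect) : R := r.1.2.
Definition ryb (r : rect) : R := r.2.1.
Definition ryt (r : rect) : R := r.2.2.

Definition rect_wf (r : rect) : Prop := rxl r < rxr r /\ ryb r < ryt r.

Definition rect_set (r : rect) : set pt :=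
  [set p | rxl r <= p.1 <= rxr r /\ ryb r <= p.2 <= ryt r].

Definition non_piercing (Rs : seq rect) : Prop :=
  forall r1 r2, r1 \in Rs -> r2 \in Rs ->
    connected (rect_set r1 `\` rect_set r2).

Definition general_position (P : seq pt) (Rs : seq rect) : Prop :=
  uniq (map fst P ++ flatten [seq [:: rxl r; rxr r] | r <- Rs]) /\
  uniq (map snd P ++ flatten [seq [:: ryb r; ryt r] | r <- Rs]).

(* S discretely pierces r: r \ S has exactly two connected components,
   each containing a point of P *)
Definition dpierces (P : seq pt) (S : set pt) (r : rect) : Prop :=
  let D := rect_set r `\` S in
  exists a b : pt, [/\ a \in P, b \in P, D a /\ D b,
    ~ connected_component D a b &
    D `<=` connected_component D a `|` connected_component D b].

(* for x(q) < x(q'): v(qq') is the vertical segment from q' to (x q', y q),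
   h(qq') the horizontal segment from (x q', y q) to q *)
Definition vseg (q q' : pt) : set pt :=
  [set p | p.1 = q'.1 /\ (q.2 <= p.2 <= q'.2 \/ q'.2 <= p.2 <= q.2)].
Definition hseg (q q' : pt) : set pt :=
  [set p | p.2 = q.2 /\ q.1 <= p.1 <= q'.1].
Definition edge_set (q q' : pt) : set pt := vseg q q' `|` hseg q q'.

Definition open_vseg (q q' : pt) : set pt :=
  [set p | p.1 = q'.1 /\ (q.2 < p.2 < q'.2 \/ q'.2 < p.2 < q.2)].
Definition open_hseg (q q' : pt) : set pt :=
  [set p | p.2 = q.2 /\ q.1 < p.1 < q'.1].

(* crossings: a horizontal and a vertical piece meeting at a point interior
   to both (in general position this is the only way two edges can cross) *)
Definition h_crosses (q q' : pt) (f : pt * pt) : Prop :=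
  open_hseg q q' `&` open_vseg f.1 f.2 !=set0.
Definition v_crosses (q q' : pt) (f : pt * pt) : Prop :=
  open_vseg q q' `&` open_hseg f.1 f.2 !=set0.
Definition edges_cross (e f : pt * pt) : Prop :=
  h_crosses e.1 e.2 f \/ v_crosses e.1 e.2 f.

Definition delaunay (P : seq pt) (q q' : pt) : Prop :=
  forall p, p \in P ->
    ~ ((q.1 < p.1 < q'.1 \/ q'.1 < p.1 < q.1) /\
       (q.2 < p.2 < q'.2 \/ q'.2 < p.2 < q.2)).

Definition valid (P : seq pt) (Rs : seq rect) (E : seq (pt * pt))
    (q q' : pt) : Prop :=
  (forall r, r \in Rs -> ~ dpierces P (edge_set q q') r) /\
  (forall f, f \in E -> ~ edges_cross (q, q') f).

Definition new_edges (P : seq pt) (Rs : seq rect) (done : seq pt)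
    (E : seq (pt * pt)) (p : pt) : seq (pt * pt) :=
  [seq (pj, p) | pj <- done & `[< delaunay P pj p /\ valid P Rs E pj p >]].

Fixpoint alg_aux (P : seq pt) (Rs : seq rect) (todo done : seq pt)
    (E : seq (pt * pt)) : seq (pt * pt) :=
  match todo with
  | [::] => E
  | p :: todo' => alg_aux P Rs todo' (rcons done p) (E ++ new_edges P Rs done E p)
  end.

Definition run (P : seq pt) (Rs : seq rect) (pts : seq pt) : seq (pt * pt) :=
  alg_aux P Rs pts [::] [::].

(* edge set of the output graph G, P being sorted by x-coordinate *)
Definition output (P : seq pt) (Rs : seq rect) := run P Rs P.

Definition edges_before (P : seq pt) (Rs : seq rect) (q' : pt) :=
  run P Rs (take (index q' P) P).

End Defs.

(* Main.v *)
Require Import Defs.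
From HB Require Import structures.
From mathcomp Require Import all_boot all_order all_algebra.
From mathcomp Require Import all_classical all_reals all_analysis.
From mathcomp Require Import lra.
Import Order.TTheory GRing.Theory Num.Theory numFieldNormedType.Exports.
Local Open Scope classical_set_scope.
Local Open Scope ring_scope.

Section S.
Variable R : realType.
Local Notation pt := (R * R)%type.

Lemma cont_l (c : R) : continuous (fun t : R => (t, c) : pt).
Proof. move=> x.
exact: (@cvg_pair _ _ _ (nbhs x) (nbhs x) (nbhs c) _ _ _ (fun t => t) (fun _ => c) cvg_id (cvg_cst c)).
Qed.
Lemma cont_r (c : R) : continuous (fun t : R => (c, t) : pt).
Proof. move=> x.
exact: (@cvg_pair _ _ _ (nbhs x) (nbhs c) (nbhs x) _ _ _ (fun _ => c) (fun t => t) (cvg_cst c) cvg_id).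
Qed.

Lemma hseg_conn (u v : pt) : connected (hseg u v).
Proof.
have -> : hseg u v = (fun t : R => (t, u.2) : pt) @` [set t | u.1 <= t <= v.1].
  apply/seteqP; split.
    by case=> x y [/= -> H]; exists x.
  by move=> _ [t Ht <-]; split.
apply: connected_continuous_connected.
  apply/connected_intervalP => x y /andP[hx _] /andP[_ hy] z /andP[xz zy].
  by apply/andP; split; [exact: le_trans xz|exact: le_trans hy].
exact/continuous_subspaceT/cont_l.
Qed.

Lemma vseg_conn (u v : pt) : connected (vseg u v).
Proof.
have -> : vseg u v = (fun t : R => (v.1, t) : pt) @` [set t | u.2 <= t <= v.2 \/ v.2 <= t <= u.2].
  apply/seteqP; split.
    by case=> x y [/= -> H]; exists y.
  by move=> _ [t Ht <-]; split.
apply: connected_continuous_connected; last exact/continuous_subspaceT/cont_r.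
apply/connected_intervalP => x y hx hy z /andP[xz zy].
case: (lerP u.2 v.2) => h; [left|right]; apply/andP; split;
  case: hx => /andP[hx1 hx2]; case: hy => /andP[hy1 hy2]; lra.
Qed.

Lemma dpierces_ext (P : seq pt) (S1 S2 : set pt) (r : rect R) :
  rect_set r `\` S1 = rect_set r `\` S2 -> dpierces P S1 r -> dpierces P S2 r.
Proof. by move=> e; rewrite /dpierces; cbv zeta; rewrite e. Qed.

Lemma not_dpierces (P : seq pt) (S : set pt) (r : rect R) (H : set pt) :
  connected H ->
  (forall a, a \in P -> (rect_set r `\` S) a ->
     exists C : set pt, [/\ C a, C `<=` rect_set r `\` S, connected C & C `&` H !=set0]) ->
  H `<=` rect_set r `\` S ->
  ~ dpierces P S r.
Proof.
move=> cH hC HD [a [b [aP bP [Da Db] nab _]]].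
have [Ca [Caa CaD cCa [x [Cax Hx]]]] := hC a aP Da.
have [Cb [Cbb CbD cCb [y [Cby Hy]]]] := hC b bP Db.
apply: nab; exists ((Ca `|` H) `|` Cb); last by right.
split.
- by left; left.
- by move=> z [[Cz|Hz]|Cz]; [apply: CaD|apply: HD|apply: CbD].
- apply: connectedU.
  + by exists y; split; [right|].
  + by apply: connectedU => //; exists x.
  + done.
Qed.

Ltac hsplit := repeat match goal with
  | |- forall _, _ => let x := fresh "x" in intro x
  | |- ~ _ => let x := fresh "H" in intro x
  | H : _ /\ _ |- _ => let H1 := fresh "H" in let H2 := fresh "H" in destruct H as [H1 H2]
  | H : _ \/ _ |- _ => let H1 := fresh "H" in destruct H as [H1|H1]
  | H : is_true (_ && _) |- _ => let H1 := fresh "H" in let H2 := fresh "H" in case/andP: H => H1 H2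
  | H : is_true (_ || _) |- _ => let H1 := fresh "H" in case/orP: H => H1
  | |- _ /\ _ => split
  | |- is_true (_ && _) => apply/andP; split
  end.

Ltac geo := unfold setD, setU, setI, edge_set, vseg, hseg, rect_set in * ; hsplit; simpl in *; try lra.

Lemma corner_in (P : seq pt) (r : rect R) (q q' : pt) :
  q \in P -> q' \in P -> q.1 < q'.1 ->
  rxl r < q'.1 < rxr r -> ryb r < q.2 < ryt r ->
  delaunay P q q' ->
  {in P &, forall a b, a.1 = b.1 -> a = b} ->
  {in P &, forall a b, a.2 = b.2 -> a = b} ->
  ~ dpierces P (edge_set q q') r.
Proof.
move=> qP q'P hq /andP[h1 h2] /andP[h3 h4] hD inj1 inj2.
have hne : q.2 != q'.2.
  apply/eqP => e; have eq := inj2 _ _ qP q'P e; rewrite eq in hq; lra.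
case: (ltgtP q.2 q'.2) => [up|down|eq]; last by rewrite eq eqxx in hne.
- apply: (@not_dpierces _ _ _ (hseg (rxl r, ryb r) (rxr r, 0) `|` vseg (0, ryb r) (rxr r, ryt r))).
  + apply: connectedU; [|exact: hseg_conn|exact: vseg_conn].
    exists (rxr r, ryb r); geo.
  + move=> a aP Da.
    case: (boolP ((a.2 < q.2) || (a.1 < q.1))) => hA.
      exists (vseg (0, ryb r) a); split; [ |  | exact: vseg_conn | ].
      * geo.
      * case=> x y; geo.
      * exists (a.1, ryb r); geo.
    case: (boolP ((q'.1 < a.1) || (q'.2 < a.2))) => hB.
      exists (hseg a (rxr r, 0)); split; [ |  | exact: hseg_conn | ].
      * geo.
      * case=> x y; geo.
      * exists (rxr r, a.2); geo.
    exfalso; move: hA hB; rewrite !negb_or -!leNgt => /andP[a2 a1] /andP[a1' a2'].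
    case: Da => Dr Dn.
    have [e|n1] := eqVneq a.1 q.1.
      by have ea := inj1 _ _ aP qP e; apply: Dn; right; rewrite ea; geo.
    have [e|n2] := eqVneq a.2 q'.2.
      by have ea := inj2 _ _ aP q'P e; apply: Dn; left; rewrite ea; geo.
    have [e|n3] := eqVneq a.2 q.2.
      by apply: Dn; right; geo.
    have [e|n4] := eqVneq a.1 q'.1.
      by apply: Dn; left; geo.
    rewrite eq_sym in n1; rewrite eq_sym in n3.
    apply: (hD a aP); split; left; apply/andP; split; rewrite lt_neqAle ?n1 ?n2 ?n3 ?n4 //.
  + case=> x y; geo.
- apply: (@not_dpierces _ _ _ (hseg (rxl r, ryt r) (rxr r, 0) `|` vseg (0, ryb r) (rxr r, ryt r))).
  + apply: connectedU; [|exact: hseg_conn|exact: vseg_conn].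
    exists (rxr r, ryt r); geo.
  + move=> a aP Da.
    case: (boolP ((q.2 < a.2) || (a.1 < q.1))) => hA.
      exists (vseg (0, ryt r) a); split; [ |  | exact: vseg_conn | ].
      * geo.
      * case=> x y; geo.
      * exists (a.1, ryt r); geo.
    case: (boolP ((q'.1 < a.1) || (a.2 < q'.2))) => hB.
      exists (hseg a (rxr r, 0)); split; [ |  | exact: hseg_conn | ].
      * geo.
      * case=> x y; geo.
      * exists (rxr r, a.2); geo.
    exfalso; move: hA hB; rewrite !negb_or -!leNgt => /andP[a2 a1] /andP[a1' a2'].
    case: Da => Dr Dn.
    have [e|n1] := eqVneq a.1 q.1.
      by have ea := inj1 _ _ aP qP e; apply: Dn; right; rewrite ea; geo.
    have [e|n2] := eqVneq a.2 q'.2.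
      by have ea := inj2 _ _ aP q'P e; apply: Dn; left; rewrite ea; geo.
    have [e|n3] := eqVneq a.2 q.2.
      by apply: Dn; right; geo.
    have [e|n4] := eqVneq a.1 q'.1.
      by apply: Dn; left; geo.
    rewrite eq_sym in n1; rewrite eq_sym in n2.
    apply: (hD a aP); split; [left|right]; apply/andP; split; rewrite lt_neqAle ?n1 ?n2 ?n3 ?n4 //.
  + case=> x y; geo.
Qed.

Lemma pierce_split (P : seq pt) (r : rect R) (q q' : pt) :
  q \in P -> q' \in P -> q.1 < q'.1 ->
  q'.1 != rxl r -> q'.1 != rxr r -> q.2 != ryb r -> q.2 != ryt r ->
  delaunay P q q' ->
  {in P &, forall a b, a.1 = b.1 -> a = b} ->
  {in P &, forall a b, a.2 = b.2 -> a = b} ->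
  dpierces P (edge_set q q') r ->
  dpierces P (hseg q q') r \/ dpierces P (vseg q q') r.
Proof.
move=> qP q'P hq n1 n2 n3 n4 hD inj1 inj2 hp.
case: (boolP ((q'.1 < rxl r) || (rxr r < q'.1))) => hx.
  left; apply: dpierces_ext hp; apply/seteqP; split.
    by move=> p [rp np]; split => // hp'; apply: np; right.
  move=> p [rp np]; split => //; case => // vp; move: vp rp hx; geo.
case: (boolP ((q.2 < ryb r) || (ryt r < q.2))) => hy.
  right; apply: dpierces_ext hp; apply/seteqP; split.
    by move=> p [rp np]; split => // hp'; apply: np; left.
  move=> p [rp np]; split => //; case => // vp; move: vp rp hy; geo.
exfalso; move: hx hy; rewrite !negb_or -!leNgt => /andP[x1 x2] /andP[y1 y2].
have hxi : rxl r < q'.1 < rxr r.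
  by rewrite !lt_neqAle x1 x2 !andbT; apply/andP; split=> //; rewrite eq_sym.
have hyi : ryb r < q.2 < ryt r.
  by rewrite !lt_neqAle y1 y2 !andbT; apply/andP; split=> //; rewrite eq_sym.
exact: (@corner_in P r q q' qP q'P hq hxi hyi hD inj1 inj2 hp).
Qed.

Lemma alg_aux_cat (P : seq pt) (Rs : seq (rect R)) xs ys done E :
  alg_aux P Rs (xs ++ ys) done E = alg_aux P Rs ys (done ++ xs) (alg_aux P Rs xs done E).
Proof.
elim: xs done E => [|x xs IH] done E /=; first by rewrite cats0.
by rewrite IH cat_rcons.
Qed.

Lemma alg_aux_sub (P : seq pt) (Rs : seq (rect R)) todo done E :
  {subset E <= alg_aux P Rs todo done E}.
Proof.
elim: todo done E => [|x xs IH] done E //= f fE.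
by apply: IH; rewrite mem_cat fE.
Qed.

Lemma alg_aux_snd (P : seq pt) (Rs : seq (rect R)) todo done E f :
  f \in alg_aux P Rs todo done E -> f \in E \/ f.2 \in todo.
Proof.
elim: todo done E => [|x xs IH] done E /=; first by left.
move=> /IH [|]; last by move=> h; right; rewrite inE h orbT.
rewrite mem_cat => /orP[]; first by left.
by move=> /mapP [pj _ ->]; right; rewrite inE eqxx.
Qed.

Lemma uniq_map_inj (T U : eqType) (f : T -> U) s :
  uniq (map f s) -> {in s &, injective f}.
Proof.
elim: s => //= x s IH /andP[nx us] a b; rewrite !inE.
move=> /orP[/eqP->|aS] /orP[/eqP->|bS] e //.
- by rewrite e map_f in nx.
- by rewrite -e map_f in nx.
- exact: IH.
Qed.

Lemma lt_before (P : seq pt) x y :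
  sorted (fun a b : pt => a.1 < b.1) P -> x \in P -> y \in P ->
  (index x P < index y P)%N -> x.1 < y.1.
Proof.
move=> sP xP yP lt.
have tr : transitive (fun a b : pt => a.1 < b.1) by move=> a b c; exact: lt_trans.
have := @sorted_ltn_nth _ _ tr x P sP (index x P) (index y P).
rewrite !inE !index_mem (nth_index _ xP) (nth_index _ yP); apply => //.
Qed.
End S.
Arguments lt_before {R P x y}.
Arguments uniq_map_inj {T U f s}.
Arguments alg_aux_snd {R P Rs todo done E f}.
Arguments alg_aux_sub {R P Rs todo done E}.


Theorem proposition6 (R : realType) (P : seq (R * R)%type) (Rs : seq (rect R)) :
  sorted (fun a b : (R * R)%type => a.1 < b.1) P ->
  general_position P Rs ->
  (forall r, r \in Rs -> rect_wf r) ->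
  non_piercing Rs ->
  forall q q' : (R * R)%type, q \in P -> q' \in P -> q.1 < q'.1 ->
  delaunay P q q' ->
  (q, q') \notin output P Rs ->
  (((exists r, r \in Rs /\ dpierces P (hseg q q') r) \/
    (exists f, f \in edges_before P Rs q' /\ h_crosses q q' f)) \/
   (exists r, r \in Rs /\ dpierces P (vseg q q') r)) /\
  ~ (exists f, f \in edges_before P Rs q' /\ v_crosses q q' f).
Proof.
move=> sP gp wf np q q' qP q'P hq hD nout.
have inj1 : {in P &, forall a b : (R * R)%type, a.1 = b.1 -> a = b}.
  move=> a b aP bP e; apply/eqP; apply: contraT => nab.
  have : index a P != index b P.
    by apply: contra nab => /eqP h; rewrite -(nth_index a aP) h (nth_index a bP).
  rewrite neq_ltn => /orP[] l.
    by have := lt_before sP aP bP l; rewrite e ltxx.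
  by have := lt_before sP bP aP l; rewrite e ltxx.
have inj2 : {in P &, forall a b : (R * R)%type, a.2 = b.2 -> a = b}.
  have := gp.2; rewrite cat_uniq => /and3P[u _ _].
  move=> a b aP bP e; by move: (uniq_map_inj u) => /(_ a b aP bP e).

have gpx : forall r, r \in Rs -> q'.1 != rxl r /\ q'.1 != rxr r.
  move=> r rR; have := gp.1; rewrite cat_uniq => /and3P[_ /hasPn H _].
  have hx : forall z, z \in [:: rxl r; rxr r] -> z \notin map fst P.
    move=> z zin; apply: H; apply/flattenP; exists [:: rxl r; rxr r] => //.
    exact: (map_f (fun r0 => [:: rxl r0; rxr r0]) rR).
  have q'in : q'.1 \in map fst P := map_f fst q'P.
  split; apply/eqP => e.
    by have := hx (rxl r); rewrite !inE eqxx /= -e q'in => /(_ isT).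
  by have := hx (rxr r); rewrite !inE eqxx orbT -e q'in => /(_ isT).
have gpy : forall r, r \in Rs -> q.2 != ryb r /\ q.2 != ryt r.
  move=> r rR; have := gp.2; rewrite cat_uniq => /and3P[_ /hasPn H _].
  have hx : forall z, z \in [:: ryb r; ryt r] -> z \notin map snd P.
    move=> z zin; apply: H; apply/flattenP; exists [:: ryb r; ryt r] => //.
    exact: (map_f (fun r0 => [:: ryb r0; ryt r0]) rR).
  have qin : q.2 \in map snd P := map_f snd qP.
  split; apply/eqP => e.
    by have := hx (ryb r); rewrite !inE eqxx /= -e qin => /(_ isT).
  by have := hx (ryt r); rewrite !inE eqxx orbT -e qin => /(_ isT).
have hidx : (index q P < index q' P)%N.
  case: (ltngtP (index q P) (index q' P)) => [//|gt|eq].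
    by have := lt_before sP q'P qP gt; rewrite ltNge (ltW hq).
  have e : q = q' by rewrite -(nth_index q qP) eq (nth_index q q'P).
  by rewrite e ltxx in hq.
have qin : q \in take (index q' P) P by rewrite in_take.
have eP : take (index q' P) P ++ q' :: drop (index q' P).+1 P = P.
  by have := cat_take_drop (index q' P) P; rewrite (drop_nth q') ?index_mem // nth_index.
have hout : (q, q') \in new_edges P Rs (take (index q' P) P) (edges_before P Rs q') q' ->
    (q, q') \in output P Rs.
  move=> h; rewrite /output /run.
  have -> : alg_aux P Rs P [::] [::] =
    alg_aux P Rs (take (index q' P) P ++ q' :: drop (index q' P).+1 P) [::] [::] by rewrite eP.
  rewrite alg_aux_cat /=; apply: alg_aux_sub; rewrite mem_cat; apply/orP; right.
  exact: h.
have notvalid : ~ valid P Rs (edges_before P Rs q') q q'.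
  move=> hv; apply: (negP nout); apply: hout; apply/mapP; exists q => //.
  by rewrite mem_filter qin andbT; apply/asboolP; split.
have vc_no : forall f, f \in edges_before P Rs q' -> ~ v_crosses q q' f.
  move=> f fE; rewrite /v_crosses /open_vseg /open_hseg => -[p [[e _] [_ /andP[_ l]]]].
  have [] := alg_aux_snd fE; first by rewrite in_nil.
  move=> f2in; have f2P : f.2 \in P := mem_take f2in.
  rewrite in_take // in f2in.
  have := lt_before sP f2P q'P f2in; rewrite -e ltNge (ltW l) //.
split; last by move=> [f [fE vc]]; exact: vc_no fE vc.
apply: contrapT => nH; apply: notvalid; split.
- move=> r rR dp; have [x1 x2] := gpx r rR; have [y1 y2] := gpy r rR.
  case: (@pierce_split R P r q q' qP q'P hq x1 x2 y1 y2 hD inj1 inj2 dp) => h.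
    by apply: nH; left; left; exists r.
  by apply: nH; right; exists r.
- move=> f fE [hc|vc]; last exact: vc_no fE vc.
  by apply: nH; left; right; exists f.
Qed.
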